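(* Let $X$ be a linearly ordered set and let $\mathrm{BiComDer}\langle X,d\rangle$ be the free $\mathrm{BiCom}$-algebra with one derivation $d$ generated by $X$ (identified with $\mathrm{BiCom}\langle d^\omega X\rangle$, $d^\omega X=\{d^s(x)\mid s\ge0,x\in X\}$). Let $\mathrm{SGD}^!\langle X\rangle$ be the subalgebra of $\mathrm{BiComDer}\langle X,d\rangle$ generated by $X$ with respect to the operations $*$ and $u\star v=d(u)\odot v$. Then an element $f\in\mathrm{BiComDer}\langle X,d\rangle$ belongs to $\mathrm{SGD}^!\langle X\rangle$ if and only if, when $f$ is written in the basis of monomials of $\mathrm{BiCom}\langle d^\omega X\rangle$, all monomials occurring in $f$ have weight $-1$.
   Context: A $\mathrm{BiCom}$-algebra is a vector space with two bilinear operations $*$ and $\odot$, each associative and commutative, satisfying $(x\odot y)*z=x\odot(y*z)$; a derivation of it is a linear map that is a derivation for both operations. The weight of monomials in $\mathrm{BiComDer}\langle X,d\rangle$ is defined inductively by $\mathrm{wt}(x)=-1$ for $x\in X$, $\mathrm{wt}(d(u))=\mathrm{wt}(u)+1$, $\mathrm{wt}(u*v)=\mathrm{wt}(u)+\mathrm{wt}(v)+1$, $\mathrm{wt}(u\odot v)=\mathrm{wt}(u)+\mathrm{wt}(v)$ (this is well defined on the basis monomials $x_1*\dots*x_t*(y_1\odot\dots\odot y_k)$, $x_i,y_j\in d^\omega X$). *)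

(* Defs.v *)
From HB Require Import structures.
From mathcomp Require Import all_boot all_order all_algebra.
Set Implicit Arguments. Unset Strict Implicit. Unset Printing Implicit Defensive.
Import Order.TTheory GRing.Theory Num.Theory.
Local Open Scope ring_scope.

(* A generator d^s(x) of d^omega X is encoded as the pair (s, x).
   A basis monomial x_1*...*x_t*(y_1 (.) ... (.) y_k) of the free BiCom-algebra
   (t >= 0, k >= 1) is encoded as (M, t) where M is the multiset
   {x_1,...,x_t,y_1,...,y_k} (a sequence considered up to permutation) and
   t is the number of *-products; validity: 0 <= t < size M.
   In the free BiCom-algebra the monomial depends only on M and t
   (the identity (a(.)b)*c = a(.)(b*c) together with commutativity lets any
   factor be moved between the *-part and the (.)-part), so these pairs
   (modulo permutation of M) form the monomial basis. *)
Section BiCom.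
Variables (disp : Order.disp_t) (X : orderType disp) (K : fieldType).

Definition gen := (nat * X)%type.
Definition mon := (seq gen * nat)%type.

Definition mon_valid (m : mon) : bool := (0 < size m.1)%N && (m.2 < size m.1)%N.

Definition mon_eq (m n : mon) : bool := perm_eq m.1 n.1 && (m.2 == n.2).

Definition wt (m : mon) : int :=
  (\sum_(g <- m.1) ((g.1)%:Z - 1)) + (m.2)%:Z.

Definition mon_star (m n : mon) : mon := (m.1 ++ n.1, (m.2 + n.2).+1)%N.
Definition mon_odot (m n : mon) : mon := (m.1 ++ n.1, (m.2 + n.2)%N).

(* derivation of a monomial: Leibniz rule for both products, d(d^s x) = d^(s+1) x;
   d(m) = sum over the factors of m of m with that factor differentiated *)
Fixpoint der_seq (s : seq gen) : seq (seq gen) :=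
  match s with
  | [::] => [::]
  | g :: s' => ((g.1.+1, g.2) :: s') :: [seq g :: r | r <- der_seq s']
  end.
Definition mon_der (m : mon) : seq mon := [seq (r, m.2) | r <- der_seq m.1].

Definition elt := seq (K * mon).

Definition coef (f : elt) (m : mon) : K := \sum_(p <- f | mon_eq p.2 m) p.1.

Definition elt_gen (x : X) : elt := [:: (1, ([:: (0%N, x)], 0%N))].
Definition elt_add (f g : elt) : elt := f ++ g.
Definition elt_scale (a : K) (f : elt) : elt := [seq (a * p.1, p.2) | p <- f].
Definition elt_star (f g : elt) : elt :=
  [seq (p.1 * q.1, mon_star p.2 q.2) | p <- f, q <- g].
Definition elt_odot (f g : elt) : elt :=
  [seq (p.1 * q.1, mon_odot p.2 q.2) | p <- f, q <- g].
Definition elt_der (f : elt) : elt :=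
  flatten [seq [seq (p.1, m) | m <- mon_der p.2] | p <- f].
Definition elt_sgd (f g : elt) : elt := elt_odot (elt_der f) g.

(* SGD^!<X>: the subalgebra generated by X w.r.t. * and \star, i.e. the least
   subspace containing X and closed under * and \star (membership is
   invariant under equality of elements, i.e. equality of all coefficients). *)
Inductive in_SGD : elt -> Prop :=
  | SGD_gen x : in_SGD (elt_gen x)
  | SGD_zero : in_SGD [::]
  | SGD_add f g : in_SGD f -> in_SGD g -> in_SGD (elt_add f g)
  | SGD_scale a f : in_SGD f -> in_SGD (elt_scale a f)
  | SGD_star f g : in_SGD f -> in_SGD g -> in_SGD (elt_star f g)
  | SGD_sgd f g : in_SGD f -> in_SGD g -> in_SGD (elt_sgd f g)
  | SGD_ext f g : in_SGD f -> (forall m, coef f m = coef g m) -> in_SGD g.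

End BiCom.

(* Main.v *)
Require Import Defs.
From HB Require Import structures.
From mathcomp Require Import all_boot all_order all_algebra.
From mathcomp Require Import zify.
Set Implicit Arguments. Unset Strict Implicit. Unset Printing Implicit Defensive.
Import Order.TTheory GRing.Theory Num.Theory.
Local Open Scope ring_scope.

Section Proof.
Variables (disp : Order.disp_t) (X : orderType disp) (K : fieldType).
Local Notation gen := (gen X).
Local Notation mon := (mon X).
Local Notation elt := (elt X K).

Definition sN (s : seq gen) : nat := (\sum_(g <- s) g.1)%N.

Lemma sN_cons g s : sN (g :: s) = (g.1 + sN s)%N.
Proof. by rewrite /sN big_cons. Qed.

Lemma sumwt (s : seq gen) : \sum_(g <- s) ((g.1)%:Z - 1) = (sN s)%:Z - (size s)%:Z.
Proof.
elim: s => [|g s IH]; first by rewrite big_nil /sN big_nil.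
rewrite big_cons IH sN_cons /=. lia.
Qed.

Lemma wtE (m : mon) : wt m = (sN m.1)%:Z - (size m.1)%:Z + (m.2)%:Z.
Proof. by rewrite /wt sumwt. Qed.

Lemma wtE1 (m : mon) : (wt m == -1) = ((sN m.1 + m.2).+1 == size m.1)%N.
Proof. rewrite wtE. apply/eqP/eqP; lia. Qed.


Lemma mon_eq_refl (a : mon) : mon_eq a a.
Proof. by rewrite /mon_eq perm_refl eqxx. Qed.

Lemma mon_eq_sym (a b : mon) : mon_eq a b = mon_eq b a.
Proof. by rewrite /mon_eq perm_sym eq_sym. Qed.

Lemma mon_eq_trans (a b c : mon) : mon_eq a b -> mon_eq b c -> mon_eq a c.
Proof.
rewrite /mon_eq => /andP[p1 /eqP e1] /andP[p2 /eqP e2].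
by rewrite (perm_trans p1 p2) e1 e2 eqxx.
Qed.

Lemma mon_eq_wt (a b : mon) : mon_eq a b -> wt a = wt b.
Proof.
rewrite /mon_eq => /andP[p /eqP e]; rewrite !wtE e (perm_size p) /sN.
by rewrite (perm_big _ p).
Qed.

Definition Lin (f : elt) (phi : mon -> K) := \sum_(p <- f) p.1 * phi p.2.

Lemma coef_cat (f g : elt) m : coef (f ++ g) m = coef f m + coef g m.
Proof. by rewrite /coef big_cat. Qed.

Lemma coef_scale a (f : elt) m : coef (elt_scale a f) m = a * coef f m.
Proof. by rewrite /coef big_map big_distrr. Qed.

Lemma coef_nil m : coef ([::] : elt) m = 0.
Proof. by rewrite /coef big_nil. Qed.

Lemma coef1 (c : K) (a : mon) m : coef [:: (c, a)] m = if mon_eq a m then c else 0.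
Proof. by rewrite /coef big_cons big_nil /=; case: ifP => _; rewrite ?addr0. Qed.

Lemma LinZ (f : elt) phi : (forall m, coef f m = 0) ->
  (forall a b, mon_eq a b -> phi a = phi b) -> Lin f phi = 0.
Proof.
move=> Hf Hphi; move: {2}(size f) (leqnn (size f)) => n.
elim: n f Hf => [|n IH] f Hf Hs.
  by case: f Hf Hs => // _ _; rewrite /Lin big_nil.
case: f Hf Hs => [|p0 f'] Hf Hs; first by rewrite /Lin big_nil.
set f := p0 :: f' in Hf Hs *.
rewrite /Lin (bigID (fun p => mon_eq p.2 p0.2)) /=.
have -> : \sum_(p <- f | mon_eq p.2 p0.2) p.1 * phi p.2 =
          \sum_(p <- f | mon_eq p.2 p0.2) p.1 * phi p0.2.
  by apply: eq_bigr => p /Hphi ->.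
rewrite -big_distrl /= -/(coef f p0.2) Hf mul0r add0r.
rewrite -big_filter; apply: IH.
- move=> m; rewrite /coef big_filter_cond.
  case E: (mon_eq m p0.2).
    rewrite big1 // => p /andP[/negbTE H1 H2].
    by rewrite (mon_eq_trans H2 E) in H1.
  transitivity (coef f m); last exact: Hf.
  apply: eq_bigl => p.
  case H2: (mon_eq p.2 m); rewrite ?andbF ?andbT //.
  apply/negP => H1; move: E.
  by rewrite (mon_eq_trans (_ : mon_eq m p.2) H1) // mon_eq_sym.
- rewrite /f /= mon_eq_refl /=.
  by rewrite size_filter (leq_trans (count_size _ _)) // -ltnS.
Qed.


Lemma coefE (f : elt) m : coef f m = Lin f (fun a => (mon_eq a m)%:R).
Proof.
rewrite /coef /Lin big_mkcond; apply: eq_bigr => p _.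
by case: ifP; rewrite ?mulr1 ?mulr0.
Qed.

Lemma coef_allpairs (op : mon -> mon -> mon) (f g : elt) m :
  coef [seq (p.1 * q.1, op p.2 q.2) | p <- f, q <- g] m =
  Lin f (fun a => Lin g (fun b => (mon_eq (op a b) m)%:R)).
Proof.
rewrite coefE /Lin big_allpairs_dep /=; apply: eq_bigr => p _.
by rewrite big_distrr; apply: eq_bigr => q _; rewrite /= mulrA.
Qed.

Lemma sum_count (T : Type) (s : seq T) (P : pred T) :
  \sum_(x <- s) ((P x)%:R : K) = (count P s)%:R.
Proof.
elim: s => [|x s IH]; first by rewrite big_nil.
by rewrite big_cons IH /= natrD.
Qed.

Lemma coef_der (f : elt) m :
  coef (elt_der f) m = Lin f (fun a => (count (fun r => mon_eq r m) (mon_der a))%:R).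
Proof.
rewrite coefE /Lin /elt_der big_flatten big_map; apply: eq_bigr => p _.
by rewrite big_map /= -big_distrr /= sum_count.
Qed.

Definition InvW (w : int) (f : elt) := forall m, wt m != w -> coef f m = 0.

Lemma LinW w (f : elt) phi : InvW w f -> (forall a, wt a = w -> phi a = 0) ->
  (forall a b, mon_eq a b -> phi a = phi b) -> Lin f phi = 0.
Proof.
move=> Hf H0 Hphi; rewrite /Lin (bigID (fun p => wt p.2 == w)) /=.
rewrite big1 ?add0r; last by move=> p /eqP /H0 ->; rewrite mulr0.
rewrite -big_filter; apply: LinZ => // m.
rewrite /coef big_filter_cond.
case E: (wt m == w).
  rewrite big1 // => p /andP[H1 H2].
  by rewrite (mon_eq_wt H2) E in H1.
transitivity (coef f m); last by apply: Hf; rewrite E.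
apply: eq_bigl => p.
case H2: (mon_eq p.2 m); rewrite ?andbF ?andbT //.
by rewrite (mon_eq_wt H2) E.
Qed.


Definition pinv (P : pred (seq gen)) := forall s t, perm_eq s t -> P s = P t.

Lemma pinv_cons P y : pinv P -> pinv (fun r => P (y :: r)).
Proof. by move=> HP s t H; apply: HP; rewrite perm_cons. Qed.

Lemma perm_swap2 (u v : gen) w : perm_eq (u :: v :: w) (v :: u :: w).
Proof. by apply/permPl; apply: (perm_catCA [:: u] [:: v] w). Qed.

Lemma permM (a : seq gen) x b : perm_eq (a ++ x :: b) (x :: a ++ b).
Proof. by apply/permPl; apply: (perm_catCA a [:: x] b). Qed.

Lemma der_swap a x b P : pinv P ->
  count P (der_seq (a ++ x :: b)) = count P (der_seq (x :: a ++ b)).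
Proof.
elim: a P => [//|y a IH] P HP.
rewrite /= !count_map.
rewrite (IH _ (pinv_cons y HP)) /= count_map.
have e1 : P ((y.1.+1, y.2) :: a ++ x :: b) = P (x :: (y.1.+1, y.2) :: a ++ b).
  apply: HP; rewrite (perm_trans _ (perm_swap2 _ _ _)) // perm_cons.
  exact: permM.
have e2 : P (y :: (x.1.+1, x.2) :: a ++ b) = P ((x.1.+1, x.2) :: y :: a ++ b).
  by apply: HP; apply: perm_swap2.
have e3 : count (fun r => P (y :: x :: r)) (der_seq (a ++ b)) =
          count (fun r => P (x :: y :: r)) (der_seq (a ++ b)).
  by apply: eq_count => r; apply: HP; apply: perm_swap2.
by rewrite /preim /= e1 e2 e3 addnCA.
Qed.

Lemma der_perm s t P : pinv P -> perm_eq s t ->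
  count P (der_seq s) = count P (der_seq t).
Proof.
elim: s t P => [|x s IH] t P HP Hst.
  by move: (perm_size Hst); case: t Hst.
have Hx : x \in t by rewrite -(perm_mem Hst) mem_head.
move: Hst; case/splitPr: Hx => t1 t2 Hst.
rewrite der_swap //= !count_map; congr (_ + _)%N.
  by congr (nat_of_bool _); apply: HP; rewrite perm_cons -(perm_cons x) (perm_trans Hst) // permM.
apply: (IH _ (fun r => P (x :: r))); first exact: pinv_cons.
by rewrite -(perm_cons x) (perm_trans Hst) // permM.
Qed.


Lemma der_seq_prop s r : r \in der_seq s -> sN r = (sN s).+1 /\ size r = size s.
Proof.
elim: s r => [//|g s IH] r /=; rewrite in_cons => /orP[/eqP -> | ].
  by rewrite !sN_cons.
case/mapP => r' /IH [h1 h2] ->; by rewrite !sN_cons /= h1 h2 addnS.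
Qed.

Lemma sN_cat s t : sN (s ++ t) = (sN s + sN t)%N.
Proof. by rewrite /sN big_cat. Qed.

Lemma wt_star (a b : mon) : wt (mon_star a b) = wt a + wt b + 1.
Proof. rewrite !wtE /= sN_cat size_cat; lia. Qed.

Lemma wt_odot (a b : mon) : wt (mon_odot a b) = wt a + wt b.
Proof. rewrite !wtE /= sN_cat size_cat; lia. Qed.

Lemma wt_der (a r : mon) : r \in mon_der a -> wt r = wt a + 1.
Proof.
case/mapP => r' /der_seq_prop [h1 h2] ->; rewrite !wtE /= h1 h2; lia.
Qed.

Lemma mon_eq_starl (a a' b : mon) : mon_eq a a' -> mon_eq (mon_star a b) (mon_star a' b).
Proof. by case/andP => p /eqP e; rewrite /mon_eq /= perm_cat2r p e eqxx. Qed.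
Lemma mon_eq_starr (a b b' : mon) : mon_eq b b' -> mon_eq (mon_star a b) (mon_star a b').
Proof. by case/andP => p /eqP e; rewrite /mon_eq /= perm_cat2l p e eqxx. Qed.
Lemma mon_eq_odotl (a a' b : mon) : mon_eq a a' -> mon_eq (mon_odot a b) (mon_odot a' b).
Proof. by case/andP => p /eqP e; rewrite /mon_eq /= perm_cat2r p e eqxx. Qed.
Lemma mon_eq_odotr (a b b' : mon) : mon_eq b b' -> mon_eq (mon_odot a b) (mon_odot a b').
Proof. by case/andP => p /eqP e; rewrite /mon_eq /= perm_cat2l p e eqxx. Qed.

Lemma mon_eq_r (a a' m : mon) : mon_eq a a' -> mon_eq a m = mon_eq a' m.
Proof.
move=> H; apply/idP/idP => H2; first by apply: mon_eq_trans H2; rewrite mon_eq_sym.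
exact: mon_eq_trans H H2.
Qed.

Lemma count_der_eq (a a' m : mon) : mon_eq a a' ->
  count (fun r => mon_eq r m) (mon_der a) = count (fun r => mon_eq r m) (mon_der a').
Proof.
case/andP => p /eqP e; rewrite /mon_der !count_map e.
apply: der_perm p => s t pst /=.
by rewrite /mon_eq /= (permPl pst).
Qed.


Lemma wt_ne_eq (a m : mon) : wt a != wt m -> mon_eq a m = false.
Proof. by apply: contraNF => /mon_eq_wt ->. Qed.

Lemma forward (f : elt) : in_SGD f -> InvW (-1) f.
Proof.
elim => {f}.
- move=> x m Hm; rewrite coef1 wt_ne_eq //.
  by rewrite wtE /= /sN big_cons big_nil eq_sym.
- by move=> m _; rewrite coef_nil.
- by move=> f g _ Hf _ Hg m Hm; rewrite coef_cat Hf // Hg // addr0.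
- by move=> a f _ Hf m Hm; rewrite coef_scale Hf // mulr0.
- move=> f g _ Hf _ Hg m Hm; rewrite /elt_star coef_allpairs.
  apply: (LinW Hf).
    move=> a Ha; apply: (LinW Hg) => [b Hb|b b' Hbb'].
      by rewrite wt_ne_eq // wt_star Ha Hb (_ : -1 + -1 + 1 = -1 :> int) // eq_sym.
    by rewrite (mon_eq_r _ (mon_eq_starr a Hbb')).
  move=> a a' Haa'; apply: eq_bigr => q _.
  by rewrite (mon_eq_r _ (mon_eq_starl q.2 Haa')).
- move=> f g _ Hf _ Hg m Hm; rewrite /elt_sgd /elt_odot coef_allpairs.
  have Hd : InvW 0 (elt_der f).
    move=> m' Hm'; rewrite coef_der; apply: (LinW Hf).
      move=> a Ha; rewrite (@eq_in_count _ _ pred0) ?count_pred0 //.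
      by move=> r /wt_der Hr /=; rewrite wt_ne_eq // Hr Ha (_ : -1 + 1 = 0 :> int) // eq_sym.
    by move=> a a' Haa'; rewrite (count_der_eq _ Haa').
  apply: (LinW Hd).
    move=> a Ha; apply: (LinW Hg) => [b Hb|b b' Hbb'].
      by rewrite wt_ne_eq // wt_odot Ha Hb add0r eq_sym.
    by rewrite (mon_eq_r _ (mon_eq_odotr a Hbb')).
  move=> a a' Haa'; apply: eq_bigr => q _.
  by rewrite (mon_eq_r _ (mon_eq_odotl q.2 Haa')).
- by move=> f g _ Hf Hfg m Hm; rewrite -Hfg Hf.
Qed.


Lemma sgd_gen_eq (a : seq gen) y :
  elt_sgd [:: ((1 : K), (a, 0%N))] (elt_gen K y) =
  [seq ((1 : K), (r ++ [:: (0%N, y)], 0%N)) | r <- der_seq a].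
Proof.
rewrite /elt_sgd /elt_odot /elt_der /= cats0 flatten_map1 /mon_der -!map_comp.
by apply: eq_map => r /=; rewrite mulr1.
Qed.

Lemma gen_sgd_eq (C : seq gen) y :
  elt_sgd (elt_gen K y) [:: ((1 : K), (C, 0%N))] = [:: (1, ((1%N, y) :: C, 0%N))].
Proof. by rewrite /elt_sgd /elt_odot /elt_der /= mulr1. Qed.

Lemma gen_star_eq (C : seq gen) y t :
  elt_star (elt_gen K y) [:: ((1 : K), (C, t))] = [:: (1, ((0%N, y) :: C, t.+1))].
Proof. by rewrite /elt_star /= mulr1. Qed.

Lemma ext_mon (a b : mon) : mon_eq a b -> in_SGD [:: ((1 : K), a)] -> in_SGD [:: ((1:K), b)].
Proof.
move=> Hab H; apply: (SGD_ext H) => m; rewrite !coef1.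
by rewrite (mon_eq_r _ Hab).
Qed.

Lemma list_SGD (l : elt) : (forall p, p \in l -> in_SGD [:: p]) -> in_SGD l.
Proof.
elim: l => [|p l IH] H; first exact: SGD_zero.
apply: (SGD_add (f := [:: p])); first by apply: H; rewrite mem_head.
by apply: IH => q Hq; apply: H; rewrite in_cons Hq orbT.
Qed.

Lemma sub_head p (R : elt) : in_SGD (p :: R) -> in_SGD R -> in_SGD [:: p].
Proof.
move=> H1 H2; apply: (SGD_ext (SGD_add H1 (SGD_scale (-1) H2))) => m.
rewrite /elt_add cat_cons -cat1s !coef_cat coef_scale.
by rewrite mulN1r subrr addr0.
Qed.

Lemma has_zero (s : seq gen) : (sN s < size s)%N -> exists2 g : gen, g \in s & g.1 = 0%N.
Proof.
elim: s => [//|g s IH]; rewrite sN_cons /=.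
case E: g.1 => [|k] H; first by exists g; rewrite ?mem_head.
have [|h hs h0] := IH; first lia.
by exists h; rewrite ?in_cons ?hs ?orbT.
Qed.

Lemma has_pos (s : seq gen) : (0 < sN s)%N -> exists2 g : gen, g \in s & (0 < g.1)%N.
Proof.
elim: s => [|g s IH]; first by rewrite /sN big_nil.
rewrite sN_cons; case E: g.1 => [|k] H; last by exists g; rewrite ?mem_head ?E.
have [|h hs h0] := IH; first lia.
by exists h; rewrite ?in_cons ?hs ?orbT.
Qed.

Lemma sN_perm s t : perm_eq s t -> sN s = sN t.
Proof. by move=> p; rewrite /sN (perm_big _ p). Qed.

Lemma split_gen (s : seq gen) (g : gen) : g \in s ->
  exists D : seq gen, [/\ perm_eq s (g :: D), sN s = (g.1 + sN D)%N & size s = (size D).+1].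
Proof.
move=> Hg; have p := perm_to_rem Hg; exists (rem g s).
by rewrite (sN_perm p) sN_cons (perm_size p).
Qed.

Lemma ML n : forall (s : seq gen) t, (size s <= n)%N -> (0 < size s)%N ->
  (t < size s)%N -> (sN s + t).+1 = size s -> in_SGD [:: ((1 : K), (s, t))].
Proof.
elim: n => [|n IH] s t Hn H0 Ht Hw; first lia.
case: t Ht Hw => [|t'] Ht Hw.
  have [s1|s2] : size s = 1%N \/ (1 < size s)%N by lia.
    case: s s1 Hw {Hn H0 Ht} => [|g [|]] // _; case: g => k y.
    rewrite sN_cons /sN big_nil /= => Hw.
    have -> : k = 0%N by lia.
    exact: SGD_gen.
  have [g gs g0] := has_pos (s := s) (ltac:(lia)).
  have [Cs [p e1 e2]] := split_gen gs.
  have Claim : forall k, (0 < k)%N -> forall x (C : seq gen), (size C < n.+1)%N ->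
      (k + sN C)%N = size C -> in_SGD [:: ((1 : K), ((k, x) :: C, 0%N))].
    elim => [//|k' IHk] _ x C HC Hk.
    case: k' IHk Hk => [|k''] IHk Hk.
      rewrite -gen_sgd_eq; apply: SGD_sgd; first exact: SGD_gen.
      apply: IH; lia.
    have [z zs z0] := has_zero (s := C) (ltac:(lia)).
    have ez : (0%N, z.2) = z by case: z z0 {zs} => ? ? /= ->.
    have [D [pC f1 f2]] := split_gen zs.
    have HA : in_SGD [:: ((1 : K), ((k''.+1, x) :: D, 0%N))].
      apply: IH; rewrite /= ?sN_cons /=; lia.
    have HS := SGD_sgd HA (SGD_gen K z.2).
    rewrite sgd_gen_eq /= in HS.
    have HR : in_SGD [seq ((1 : K), (r ++ [:: (0%N, z.2)], 0%N))
                | r <- [seq (k''.+1, x) :: r0 | r0 <- der_seq D]].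
      apply: list_SGD => q /mapP [r /mapP [r' r'in ->] ->].
      have [h1 h2] := der_seq_prop r'in.
      rewrite cat_cons; apply: IHk => //.
        by rewrite size_cat h2 /=; lia.
      rewrite sN_cat size_cat h1 h2 sN_cons /sN big_nil /= -/(sN D); lia.
    have := sub_head HS HR.
    apply: ext_mon.
    rewrite /mon_eq eqxx andbT /= ez perm_cons cats1 perm_rcons perm_sym.
    exact: pC.
  apply: (ext_mon (a := ((g.1, g.2) :: Cs, 0%N))).
    by rewrite /mon_eq eqxx andbT /= -surjective_pairing perm_sym.
  apply: Claim => //; lia.
have [g gs g0] := has_zero (s := s) (ltac:(lia)).
have [Cs [p e1 e2]] := split_gen gs.
apply: (ext_mon (a := ((0%N, g.2) :: Cs, t'.+1))).
  by rewrite /mon_eq eqxx andbT /= -g0 -surjective_pairing perm_sym.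
rewrite -gen_star_eq; apply: SGD_star; first exact: SGD_gen.
apply: IH; lia.
Qed.


Lemma backward (f : elt) : all (fun p => mon_valid p.2) f ->
  (forall m : mon, coef f m != 0 -> wt m = -1) -> in_SGD f.
Proof.
move=> Hv H.
have Hg : in_SGD (filter (fun p => wt p.2 == -1) f).
  apply: list_SGD => p; rewrite mem_filter => /andP[Hw Hp].
  have /andP[v1 v2] := allP Hv p Hp.
  have HM : in_SGD [:: ((1 : K), p.2)].
    rewrite [p.2]surjective_pairing.
    apply: (ML (leqnn _) v1 v2); apply/eqP; by rewrite -wtE1.
  by have := SGD_scale p.1 HM; rewrite /elt_scale /= mulr1 -surjective_pairing.
apply: (SGD_ext Hg) => m.
rewrite /coef big_filter_cond.
case E: (wt m == -1).
  apply: eq_bigl => p; case H2: (mon_eq p.2 m); rewrite ?andbF ?andbT //.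
  by rewrite (mon_eq_wt H2) E.
rewrite big1; last first.
  by move=> p /andP[H1 H2]; rewrite (mon_eq_wt H2) E in H1.
apply/esym/eqP; apply: contraFT E => /H ->; by [].
Qed.

End Proof.

Unset Implicit Arguments.
Theorem mainTheorem6 (disp : Order.disp_t) (X : orderType disp) (K : fieldType)
    (charK0 : [pchar K] =i pred0)
    (f : elt X K) (f_valid : all (fun p => mon_valid p.2) f) :
  in_SGD f <-> (forall m : mon X, coef f m != 0 -> wt m = -1).
Proof.
split.
  move=> /forward H m; apply: contraNeq => /H ->; by [].
exact: backward.
Qed.
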